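(* Let $n,d,c\in\mathbb{N}$ with $d\ge 50$ and $c\in[d]$, let $\mathcal{F}\subseteq 2^{[n]}$ be a hereditary family with $\delta(\mathcal{F})\ge 2^{d-1}-c+1$, let $P$ be an isolated pile of $\mathcal{F}$, and put $\delta=2^{d-1}-c+1$. Then for every $x\in P$, $\omega_{out}(x)\ge \frac{\delta-d_{\mathcal{G}}(x)}{3+\log_2 c}$.
   Context: A family is hereditary if it is closed under taking subsets. $d_{\mathcal{F}}(x)=|\{F\in\mathcal{F}:x\in F\}|$, $\delta(\mathcal{F})=\min_x d_{\mathcal{F}}(x)$, $N(x)=\bigcup_{x\in F\in\mathcal{F}}F$. A set $P\subseteq[n]$ with $|P|=d$ is a pile of $\mathcal{F}$ if $P\subseteq N(y)$ for every $y\in P$, and there exists $z\in P$ with $N(z)=P$; a pile is isolated if it is disjoint from every other pile. Given the pile $P$, let $\mathcal{G}=\{S\subseteq P: S\in\mathcal{F}\}$ and $d_{\mathcal{G}}(x)=|\{S\in\mathcal{G}:x\in S\}|$. For $x\in P$, the external weight is $\omega_{out}(x)=\sum_{x\in S\in\mathcal{F}\setminus\mathcal{G}}\frac{1}{|S|}$. *)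

(* Defs.v *)
From HB Require Import structures.
From mathcomp Require Import all_boot all_order all_algebra.
From mathcomp Require Import reals exp.
Set Implicit Arguments. Unset Strict Implicit. Unset Printing Implicit Defensive.
Import Order.TTheory GRing.Theory Num.Theory.

(* Ground set [n] is modelled by 'I_n; a family is F : {set {set 'I_n}}. *)
Section Defs.
Variable n : nat.
Implicit Types (F : {set {set 'I_n}}) (P S : {set 'I_n}) (x y : 'I_n).

Definition hereditary F : Prop :=
  forall A B : {set 'I_n}, A \in F -> B \subset A -> B \in F.

Definition deg F x : nat := #|[set S in F | x \in S]|.

Definition nbhd F x : {set 'I_n} := \bigcup_(S in F | x \in S) S.

Definition is_pile F (d : nat) P : Prop :=
  #|P| = d /\ (forall y, y \in P -> P \subset nbhd F y) /\
  exists2 z, z \in P & nbhd F z = P.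

Definition isolated_pile F (d : nat) P : Prop :=
  is_pile F d P /\ forall Q, is_pile F d Q -> Q != P -> [disjoint P & Q].

(* G = members of F contained in P *)
Definition subfam F P : {set {set 'I_n}} := [set S in F | S \subset P].

Definition omega_out (R : realType) F P x : R :=
  (\sum_(S in F | (x \in S) && (S \notin subfam F P)) (#|S|%:R)^-1)%R.
End Defs.

(* Main.v *)
Require Import Defs.
From HB Require Import structures.
From mathcomp Require Import all_boot all_order all_algebra.
From mathcomp Require Import reals exp.
Import Order.TTheory GRing.Theory Num.Theory.
From mathcomp Require Import zify ring lra.


Lemma ex_subset_card (T : finType) (A : {set T}) k :
  (k <= #|A|)%N -> exists2 B : {set T}, B \subset A & #|B| = k.
Proof.
elim: k => [|k IH] hk; first by exists set0; rewrite ?sub0set ?cards0.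
have [B BA cB] := IH (ltnW hk).
have : ~~ (A \subset B).
  apply/negP => AB; have := subset_leq_card AB; rewrite cB; lia.
case/subsetPn => a aA aB.
exists (a |: B); first by rewrite subUset sub1set aA BA.
by rewrite cardsU1 aB cB.
Qed.

Section S1.
Variable n : nat.
Implicit Types (F : {set {set 'I_n}}) (P S : {set 'I_n}).

Lemma deg_split F P x :
  deg F x = (deg (subfam F P) x + #|[set S in F | (x \in S) && (S \notin subfam F P)]|)%N.
Proof.
rewrite /deg -(cardsID (subfam F P)); congr (_ + _)%N; apply: eq_card => S;
rewrite /subfam !inE;
case: (x \in S); case: (S \in F); case: (S \subset P) => //.
Qed.
End S1.


Section S2.
Variable n : nat.
Implicit Types (F : {set {set 'I_n}}) (P S : {set 'I_n}).

Lemma sub_nbhd F z T : T \in F -> z \in T -> T \subset nbhd F z.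
Proof. by move=> TF zT; apply: (bigcup_sup T); rewrite TF zT. Qed.

Lemma dG_bound F P d x z :
  hereditary F -> #|P| = d.+2 -> z \in P -> nbhd F z = P -> x \in P ->
  (2 * deg F z <= deg (subfam F P) x + 2 ^ d.+1)%N.
Proof.
move=> hF cP zP Nz xP.
have AP : forall T, T \in F -> z \in T -> T \subset P.
  by move=> T TF zT; rewrite -Nz; apply: sub_nbhd.
have [exz|xz] := eqVneq x z.
  subst z.
  have h1 : (deg F x <= deg (subfam F P) x)%N.
    apply: subset_leq_card; apply/subsetP => T; rewrite /subfam !inE.
    by case/andP => TF xT; rewrite TF xT (AP T TF xT).
  have h2 : (deg F x <= 2 ^ d.+1)%N.
    have -> : (2 ^ d.+1 = #|powerset (P :\ x)|)%N by rewrite card_powerset; congr (2 ^ _)%N; have := cardsD1 x P; rewrite xP cP; lia.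
    pose f := fun T : {set 'I_n} => T :\ x.
    have inj : {in [set S in F | x \in S] &, injective f}.
      move=> A B; rewrite !inE => /andP[_ xA] /andP[_ xB] e.
      by rewrite /f in e; rewrite -(setD1K xA) -(setD1K xB) e.
    rewrite /deg -(card_in_imset inj); apply: subset_leq_card.
    apply/subsetP => U /imsetP[T]; rewrite !inE => /andP[TF xT] ->.
    by rewrite /f setSD // (AP T TF xT).
  lia.
pose A1 := [set T in F | (z \in T) && (x \in T)].
pose A0 := [set T in F | (z \in T) && (x \notin T)].
have e1 : deg F z = (#|A1| + #|A0|)%N.
  rewrite /deg -(cardsID [set T : {set 'I_n} | x \in T]); congr (_ + _)%N; apply: eq_card => T;
  by rewrite !inE; case: (T \in F); case: (z \in T); case: (x \in T).
pose f := fun T : {set 'I_n} => T :\ z.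
have injz : forall B : {set {set 'I_n}}, (forall T, T \in B -> z \in T) -> {in B &, injective f}.
  move=> B hB A C /hB zA /hB zC e.
  by rewrite /f in e; rewrite -(setD1K zA) -(setD1K zC) e.
have h0 : (#|A0| <= 2 ^ d)%N.
  have -> : (2 ^ d = #|powerset (P :\ x :\ z)|)%N.
    rewrite card_powerset; congr (2 ^ _)%N; have := cardsD1 z (P :\ x); have := cardsD1 x P;
    rewrite in_setD1 eq_sym xz zP xP cP; lia.
  have hB : forall T, T \in A0 -> z \in T by move=> T; rewrite inE => /and3P[].
  rewrite -(card_in_imset (injz _ hB)); apply: subset_leq_card.
  apply/subsetP => U /imsetP[T]; rewrite !inE => /and3P[TF zT xT] ->.
  rewrite /f; apply/subsetP => y; rewrite !inE => /andP[yz yT].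
  rewrite yz /=; apply/andP; split; last by apply: (subsetP (AP _ TF zT)).
  by apply: contraNneq xT => <-.
have hA1 : (2 * #|A1| <= deg (subfam F P) x)%N.
  rewrite /deg -(cardsID [set T : {set 'I_n} | z \in T] [set S in subfam F P | x \in S]).
  have hB : forall T, T \in A1 -> z \in T by move=> T; rewrite inE => /and3P[].
  apply: (@leq_trans (#|A1| + #|f @: A1|)%N).
    by rewrite (card_in_imset (injz _ hB)); lia.
  apply: leq_add; apply: subset_leq_card; apply/subsetP => T.
    rewrite /subfam !inE => /and3P[TF zT xT].
    by rewrite TF xT zT AP.
  case/imsetP => U; rewrite /subfam !inE => /and3P[UF zU xU] ->.
  rewrite !inE eqxx /= xU ?andbT /f (hF U (U :\ z)) ?subD1set //=.
  by rewrite (subset_trans (subD1set U z) (AP _ UF zU)).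
rewrite e1 expnS; lia.
Qed.
End S2.




Section S3.
Variable n : nat.
Implicit Types (F : {set {set 'I_n}}) (P S : {set 'I_n}).

Definition Eset F P x := [set S in F | (x \in S) && (S \notin subfam F P)].
Definition Esm F P x t := [set S in Eset F P x | #|S| <= t].

Lemma Es_bound F P x t : hereditary F -> x \in P -> (2 <= t)%N ->
  Esm F P x t = Eset F P x \/ (2 ^ (t - 2) <= #|Esm F P x t|)%N.
Proof.
move=> hF xP t2.
have [allsm|] := boolP [forall S in Eset F P x, #|S| <= t].
  left; apply/setP => S; rewrite /Esm inE; case SE: (S \in Eset F P x) => //=.
  by move/forall_inP: allsm => /(_ S SE).
rewrite negb_forall_in => /existsP[S /andP[SE]]; rewrite -ltnNge => tS.
right.
have := SE; rewrite /Eset /subfam !inE => /and3P[SF xS].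
rewrite SF /= => /subsetPn[y yS yP].
have yx : y != x by apply: contraNneq yP => ->.
pose D := S :\ x :\ y.
have cD : (t - 2 <= #|D|)%N.
  have := cardsD1 x S; have := cardsD1 y (S :\ x); rewrite /D !inE yx yS xS /=; move=> h1 h2; rewrite h2 h1 in tS; lia.
have [D' D'D cD'] := @ex_subset_card _ _ _ cD.
pose g := fun U : {set 'I_n} => x |: (y |: U).
have ginj : {in powerset D' &, injective g}.
  move=> U V; rewrite !powersetE => UD VD e.
  have h : forall W : {set 'I_n}, W \subset D' -> (g W) :\ x :\ y = W.
    move=> W WD; apply/setP => w; rewrite !inE.
    case: (boolP (w \in W)) => wW.
      have := subsetP (subset_trans WD D'D) w wW; rewrite /D !inE => /and3P[wy wx _].
      by rewrite (negbTE wx) (negbTE wy).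
    by rewrite orbF; case: (w == x); case: (w == y).
  by rewrite -(h U UD) -(h V VD) e.
rewrite -cD' -card_powerset -(card_in_imset ginj).
apply: subset_leq_card; apply/subsetP => T /imsetP[U]; rewrite powersetE => UD' ->.
have UD : U \subset D by exact: subset_trans UD' D'D.
have US : U \subset S by apply: subset_trans UD _; rewrite /D; apply: subset_trans (subD1set _ _) (subD1set _ _).
have gS : g U \subset S by rewrite /g !subUset !sub1set xS yS US.
rewrite /Esm /Eset /subfam !inE (hF S) //= eqxx /=.
apply/andP; split.
  apply/negP => /subsetP /(_ y); rewrite /g !inE eqxx orbT => /(_ isT).
  by apply/negP.
apply: (leq_trans (leq_card_setU _ _)); rewrite cards1.
apply: (leq_trans (leq_add (leqnn 1) (leq_card_setU _ _))); rewrite cards1.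
have := subset_leq_card UD'; rewrite cD'; lia.
Qed.

Lemma omega_lb (R : realType) F P x t : (0 < t)%N ->
  ((#|Esm F P x t|)%:R / (t%:R) <= omega_out R F P x :> R)%R.
Proof.
move=> t0; rewrite /omega_out (bigID (fun S => S \in Esm F P x t)) /=.
apply: (@le_trans _ _ (\sum_(S in Esm F P x t) (#|S|%:R : R)^-1)%R).
  rewrite (_ : (#|Esm F P x t|%:R / t%:R = \sum_(S in Esm F P x t) (t%:R : R)^-1)%R); last first.
    by rewrite sumr_const mulrC mulr_natr.
  apply: ler_sum => S; rewrite /Esm /Eset !inE => /andP[/and3P[_ xS _] St].
  have S0 : (0 < #|S|)%N.
    by apply/card_gt0P; exists x.
  by rewrite lef_pV2 ?posrE ?ltr0n // ler_nat.
rewrite -[X in (X <= _)%R]addr0; apply: lerD.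
  rewrite le_eqVlt; apply/orP; left; apply/eqP; apply: eq_bigl => S.
  rewrite /Esm /Eset !inE.
  by case: (S \in F); case: (x \in S); case: (S \subset P); case: (#|S| <= t)%N.
by apply: sumr_ge0 => S _; rewrite invr_ge0 ler0n.
Qed.
End S3.

Local Open Scope ring_scope.

Theorem mainTheorem17 (R : realType) (n d c : nat)
  (F : {set {set 'I_n}}) (P : {set 'I_n}) :
  (50 <= d)%N -> (1 <= c <= d)%N ->
  hereditary F ->
  (forall x : 'I_n, (2 ^ d.-1 - c + 1 <= deg F x)%N) ->
  isolated_pile F d P ->
  forall x : 'I_n, x \in P ->
    omega_out R F P x >=
      ((2 ^ d.-1)%:R - c%:R + 1 - (deg (subfam F P) x)%:R) /
      (3 + ln (c%:R : R) / ln 2).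
Proof.
move=> d50 /andP[c1 cd] hF hdeg [[cP [_ [z zP Nz]]] _] x xP.
have cP' : #|P| = (d - 2).+2 by rewrite cP; lia.
have hz := @dG_bound n F P (d - 2) x z hF cP' zP Nz xP.
have hsplit := deg_split n F P x.
have he : (2 ^ (d - 2).+1 = 2 ^ d.-1)%N by congr (2 ^ _)%N; lia.
rewrite he in hz.
have ce : (c <= 2 ^ d.-1)%N.
  apply: (leq_trans cd); have := ltn_expl d.-1 (isT : (1 < 2)%N); lia.
have hdz := hdeg z; have hdx := hdeg x.
set e := (2 ^ d.-1)%N in hz ce hdz hdx *.
set dG := deg (subfam F P) x in hz hsplit *.
pose k := trunc_log 2 c.
pose t := k.+3.
have Kc : (e - c + 1 - dG <= c - 1)%N by lia.
have KEs : (e - c + 1 - dG <= #|Esm n F P x t|)%N.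
  have [hE|h] := Es_bound n F P x t hF xP (isT : (2 <= k.+3)%N).
    rewrite hE /Eset; rewrite hsplit in hdx. by rewrite leq_subLR.
  have tk : (t - 2 = k.+1)%N by rewrite /t; lia.
  rewrite tk in h; have := @trunc_log_ltn 2 c isT; rewrite -/k; lia.
have ln2 : (0 : R) < ln 2 by apply: ln_gt0; lra.
have lnc : (0 : R) <= ln (c%:R : R) by apply: ln_ge0; rewrite ler1n.
have ht : (t%:R : R) <= 3 + ln (c%:R : R) / ln 2.
  have hk : (2 ^ k <= c)%N by apply: trunc_logP.
  have : (k%:R : R) <= ln (c%:R : R) / ln 2.
    rewrite ler_pdivlMr // mulr_natl -lnXn; last lra.
    rewrite ler_ln ?posrE ?ltr0n ?exprn_gt0 //.
    by rewrite -natrX ler_nat.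
  rewrite /t -addn3 natrD; lra.
have t0 : (0 < t)%N by [].
have hom := omega_lb n R F P x t t0.
have den0 : (0 : R) < 3 + ln (c%:R : R) / ln 2.
  have : (0 : R) <= ln (c%:R : R) / ln 2 by apply: divr_ge0 => //; apply: ltW.
  lra.
have tpos : (0 : R) < t%:R by rewrite ltr0n.
case: (leqP dG (e - c + 1)) => hle.
  have -> : (e%:R - c%:R + 1 - dG%:R : R) = (e - c + 1 - dG)%:R.
    by rewrite natrB // natrD natrB // natr1.
  apply: le_trans hom.
  apply: (@le_trans _ _ ((e - c + 1 - dG)%:R / t%:R)).
    apply: ler_wpM2l; first by rewrite ler0n.
    by rewrite lef_pV2 ?posrE.
  apply: ler_wpM2r; first by rewrite invr_ge0 ltW.
  by rewrite ler_nat.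
apply: (@le_trans _ _ 0); last first.
  by apply: le_trans hom; apply: divr_ge0; rewrite ler0n.
rewrite ler_pdivrMr // mul0r.
have h1 : (e%:R - c%:R + 1 : R) = (e - c + 1)%:R by rewrite natrD natrB.
have h2 : ((e - c + 1)%:R : R) < dG%:R by rewrite ltr_nat.
lra.
Qed.
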